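(* Let $\tilde{A}\in\mathbb{Q}^{q\times n}$, $\tilde{b}\in\mathbb{Q}^q$ be the constraint data of the LP relaxation $P=\{x:\tilde{A}x\ge\tilde{b}\}=\{x: Ax\ge b,\ x\ge 0,\ x_j\le 1,\ j=1,\dots,p\}$ ($q=m+n+p$, $Q=\{1,\dots,q\}$), and let $T$ be a finite index set with $D^t\in\mathbb{Q}^{r\times n}$, $d_0^t\in\mathbb{Q}^r$ for $t\in T$. Let $\bar{w}=(\bar{\alpha},\bar{\beta},\{\bar{u}^t,\bar{v}^t\}_{t\in T})$ be a feasible solution of the CGLP system that is not basic, and suppose the submatrix $\tilde{A}_N$ of $\tilde{A}$ with rows indexed by $N=N(\bar{u}):=\{j\in Q:\bar{u}^t_j>0\text{ for some }t\in T\}$ has full row rank. Then the inequality $\bar{\alpha}x\ge\bar{\beta}$ is valid for the closure of regular cuts.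
   Context: The CGLP system consists of variables $\alpha\in\mathbb{R}^n$, $\beta\in\mathbb{R}$, $u^t\in\mathbb{R}^q$, $v^t\in\mathbb{R}^r$ ($t\in T$) and constraints: $\alpha-u^t\tilde{A}-v^tD^t=0$ and $\beta-u^t\tilde{b}-v^td_0^t=0$ for all $t\in T$; $\sum_{t\in T}\sum_{i=1}^q u^t_i+\sum_{t\in T}\sum_{i=1}^r v^t_i=1$; $u^t,v^t\ge 0$ for all $t\in T$. A basic feasible solution of this system is regular if there exists $J\subseteq Q$, $|J|=n$, with the $n\times n$ submatrix $\tilde{A}_J$ nonsingular and $u^t_j=0$ for all $j\notin J$, $t\in T$. A cut $\alpha x\ge\beta$ is regular if there is a regular basic feasible solution of the CGLP system whose $(\alpha,\beta)$-component equals $(\alpha,\beta)$ up to a positive scalar multiple. The closure of regular cuts is the set of points $x\in P$ satisfying every regular cut. *)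

(* Defs.v *)
From HB Require Import structures.
From mathcomp Require Import all_boot all_order all_algebra.
Set Implicit Arguments. Unset Strict Implicit. Unset Printing Implicit Defensive.
Import Order.TTheory GRing.Theory Num.Theory.
Local Open Scope ring_scope.

(* The LP relaxation data  P = {x : A x >= b, x >= 0, x_j <= 1 (j < p)}
   written as  tildeA x >= tildeb  with q = m + (n + p) rows:
   rows of A, then the n rows x_j >= 0, then the p rows -x_j >= -1. *)
Definition tildeA (R : ringType) (m n p : nat) (A : 'M[R]_(m, n))
  : 'M[R]_(m + (n + p), n) :=
  col_mx A (col_mx (1%:M : 'M[R]_n)
                   (\matrix_(i < p, j < n) if (i : nat) == j then -1 else 0)).

Definition tildeb (R : ringType) (m n p : nat) (b : 'cV[R]_m)
  : 'cV[R]_(m + (n + p)) :=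
  col_mx b (col_mx (0 : 'cV[R]_n) (const_mx (-1) : 'cV[R]_p)).

Record cglp_var (R : ringType) (T : finType) (q n r : nat) := CglpVar {
  alpha : 'rV[R]_n;
  beta  : R;
  uu    : T -> 'rV[R]_q;
  vv    : T -> 'rV[R]_r }.

Section CGLP.
Variables (R : realFieldType) (T : finType) (q n r : nat).
Variables (At : 'M[R]_(q, n)) (bt : 'cV[R]_q)
          (D : T -> 'M[R]_(r, n)) (d0 : T -> 'cV[R]_r).

(* The equality constraints of the CGLP system, with normalization
   right-hand side c (c = 1 for the CGLP itself, c = 0 for its
   homogeneous part). *)
Definition cglp_eqs (c : R) (w : cglp_var R T q n r) : Prop :=
  (forall t, alpha w - uu w t *m At - vv w t *m D t = 0) /\
  (forall t, beta w - (uu w t *m bt) 0 0 - (vv w t *m d0 t) 0 0 = 0) /\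
  (\sum_(t : T) \sum_(i < q) uu w t 0 i + \sum_(t : T) \sum_(i < r) vv w t 0 i
     = c).

Definition cglp_feasible (w : cglp_var R T q n r) : Prop :=
  cglp_eqs 1 w /\
  (forall t i, 0 <= uu w t 0 i) /\ (forall t i, 0 <= vv w t 0 i).

Definition cglp_zero (d : cglp_var R T q n r) : Prop :=
  alpha d = 0 /\ beta d = 0 /\ (forall t, uu d t = 0) /\ (forall t, vv d t = 0).

(* Basic feasible solution: feasible, and the constraints active at w
   (all equalities and the tight nonnegativity constraints) have full
   rank, i.e. the only direction annihilated by all of them is 0. *)
Definition cglp_basic (w : cglp_var R T q n r) : Prop :=
  cglp_feasible w /\
  forall d : cglp_var R T q n r,
    cglp_eqs 0 d ->
    (forall t i, uu w t 0 i = 0 -> uu d t 0 i = 0) ->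
    (forall t i, vv w t 0 i = 0 -> vv d t 0 i = 0) ->
    cglp_zero d.

(* Regular basic feasible solution: J = image of an injective f : 'I_n -> 'I_q
   (so |J| = n), tildeA_J nonsingular, u^t_j = 0 for j not in J. *)
Definition cglp_regular_bfs (w : cglp_var R T q n r) : Prop :=
  cglp_basic w /\
  exists f : 'I_n -> 'I_q,
    injective f /\ rowsub f At \in unitmx /\
    (forall t j, (forall i, f i != j) -> uu w t 0 j = 0).

Definition regular_cut (a : 'rV[R]_n) (b0 : R) : Prop :=
  exists w, cglp_regular_bfs w /\
    exists lam : R, 0 < lam /\ alpha w = lam *: a /\ beta w = lam * b0.

Definition in_P (x : 'cV[R]_n) : Prop :=
  forall i, bt i 0 <= (At *m x) i 0.

Definition in_regular_closure (x : 'cV[R]_n) : Prop :=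
  in_P x /\ forall a b0, regular_cut a b0 -> b0 <= (a *m x) 0 0.

Definition Nset (w : cglp_var R T q n r) : {set 'I_q} :=
  [set j | [exists t, 0 < uu w t 0 j]].

End CGLP.

Definition subrows (R : Type) (q n : nat) (N : {set 'I_q}) (M : 'M[R]_(q, n))
  : 'M[R]_(#|N|, n) :=
  \matrix_(i < #|N|, j < n) M (enum_val i) j.

(* Main.v *)
Require Import Defs.
From HB Require Import structures.
From mathcomp Require Import all_boot all_order all_algebra.
From Stdlib Require Import Classical.
From mathcomp Require Import ring lra.
Set Implicit Arguments. Unset Strict Implicit. Unset Printing Implicit Defensive.
Import Order.TTheory GRing.Theory Num.Theory.
Local Open Scope ring_scope.

Section Indep.
Variables (R : realFieldType) (q n : nat) (At : 'M[R]_(q, n)).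

Definition indep (S : {set 'I_q}) := forall y : 'rV[R]_q,
  (forall j, j \notin S -> y 0 j = 0) -> y *m At = 0 -> y = 0.


Lemma indep_rowfree S : row_free (subrows S At) -> indep S.
Proof.
move=> rf y yS yA.
set z := \row_(i < #|S|) y 0 (enum_val i).
have zA : z *m subrows S At = 0.
  apply/rowP => k; transitivity ((y *m At) 0 k); last by rewrite yA !mxE.
  rewrite !mxE.
  have E : \sum_j y 0 j * At j k = \sum_(j in S) y 0 j * At j k.
    rewrite [RHS]big_mkcond; apply: eq_bigr => j _.
    by case: ifP => // /negbT /yS ->; rewrite mul0r.
  by rewrite E [RHS]big_enum_val; apply: eq_bigr => i _; rewrite !mxE.
have z0 : z = 0 by apply: (row_free_inj rf); rewrite zA mul0mx.
apply/rowP => j; rewrite mxE.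
case: (boolP (j \in S)) => jS; last by rewrite yS.
have := congr1 (fun M : 'rV[R]_#|S| => M 0 (enum_rank_in jS j)) z0.
by rewrite !mxE enum_rankK_in.
Qed.

Lemma rowfree_indep S : indep S -> row_free (subrows S At).
Proof.
move=> iS; apply: contraT => nrf.
have : kermx (subrows S At) != 0 by rewrite kermx_eq0.
case/matrix0Pn => i [k Hk].
set z := row i (kermx (subrows S At)).
have zA : z *m subrows S At = 0 by apply/eqP; rewrite -sub_kermx row_sub.
have hz : z 0 k != 0 by rewrite mxE.
clearbody z; clear Hk.
set y : 'rV[R]_q := \sum_(l < #|S|) z 0 l *: delta_mx 0 (enum_val l).
have yA : y *m At = 0.
  rewrite -zA [RHS]mulmx_sum_row /y mulmx_suml; apply: eq_bigr => l _.
  rewrite -scalemxAl -rowE; congr (_ *: _); apply/rowP => c; by rewrite !mxE.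
have yS : forall j, j \notin S -> y 0 j = 0.
  move=> j jS; rewrite /y summxE big1 // => l _; rewrite !mxE eqxx /=.
  case: eqP => [ej|]; last by rewrite mulr0.
  by move: jS; rewrite ej enum_valP.
have := iS y yS yA; move/(congr1 (fun M : 'rV[R]_q => M 0 (enum_val k))).
rewrite /y summxE (bigD1 k) //= big1 ?addr0; last first.
  move=> l lk; rewrite !mxE eqxx /=.
  case: eqP => [/enum_val_inj E|]; last by rewrite mulr0.
  by rewrite E eqxx in lk.
rewrite !mxE !eqxx mulr1 => E; by rewrite E eqxx in hz.
Qed.


Hypothesis rankAt : \rank At = n.

Lemma extend N : indep N -> exists f : 'I_n -> 'I_q,
  [/\ injective f, rowsub f At \in unitmx & forall j, j \in N -> exists i, f i = j].
Proof.
move=> iN.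
pose P := fun J : {set 'I_q} => (N \subset J) && row_free (subrows J At).
have PN : P N by rewrite /P subxx rowfree_indep.
case: (arg_maxnP (fun J : {set 'I_q} => #|J|) PN) => J /andP[NJ rfJ] maxJ.
have iJ := indep_rowfree rfJ.
have sub : (At <= subrows J At)%MS.
  apply/row_subP => j; case: (boolP (j \in J)) => jJ.
    have -> : row j At = row (enum_rank_in jJ j) (subrows J At).
      by apply/rowP => c; rewrite !mxE enum_rankK_in.
    exact: row_sub.
  have niJ : ~ indep (j |: J).
    move=> iJ'.
    have PJ' : P (j |: J).
      rewrite /P rowfree_indep // andbT; apply: subset_trans NJ _; exact: subsetUr.
    have := maxJ _ PJ'; by rewrite cardsU1 jJ add1n /= ltnn.
  have [y [yS [yA y0]]] : exists y : 'rV[R]_q,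
      [/\ forall l, l \notin j |: J -> y 0 l = 0, y *m At = 0 & y <> 0].
    apply: NNPP => H; apply: niJ => y yS yA; apply: NNPP => y0; apply: H.
    by exists y.
  have yj : y 0 j != 0.
    apply/eqP => yj0; apply: y0; apply: iJ => // l lJ.
    case: (eqVneq l j) => [->//|lj]; apply: yS; by rewrite !inE negb_or lj.
  have := yA; rewrite mulmx_sum_row (bigD1 j) //= => /eqP; rewrite addr_eq0 => /eqP H.
  have -> : row j At = (y 0 j)^-1 *: (y 0 j *: row j At).
    by rewrite scalerA mulVf // scale1r.
  rewrite H; apply: scalemx_sub; rewrite eqmx_opp; apply: summx_sub => l lj.
  case: (boolP (l \in J)) => lJ.
    apply: scalemx_sub.
    have -> : row l At = row (enum_rank_in lJ l) (subrows J At).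
      by apply/rowP => c; rewrite !mxE enum_rankK_in.
    exact: row_sub.
  rewrite yS ?scale0r ?sub0mx // !inE negb_or lJ andbT //.
have eJ : #|J| = n.
  apply/anti_leq/andP; split.
    by move/eqP: rfJ => <-; exact: rank_leq_col.
  by rewrite -{1}rankAt; move/eqP: rfJ => <-; exact: mxrankS.
pose f := fun i : 'I_n => (enum_val (cast_ord (esym eJ) i) : 'I_q).
exists f; split.
- by move=> i1 i2 /enum_val_inj /cast_ord_inj.
- rewrite -row_free_unit /row_free; apply/eqP/anti_leq/andP; split.
    exact: rank_leq_col.
  rewrite -{1}rankAt; apply: mxrankS; apply: submx_trans sub _.
  apply/row_subP => i.
  have -> : row i (subrows J At) = row (cast_ord eJ i) (rowsub f At).
    by apply/rowP => c; rewrite !mxE /f cast_ordK.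
  exact: row_sub.
- move=> j jN; have jJ : j \in J by apply: (subsetP NJ).
  exists (cast_ord eJ (enum_rank_in jJ j)).
  by rewrite /f cast_ordK enum_rankK_in.
Qed.
End Indep.

Section Main.
Variables (R : realFieldType) (T : finType) (q n r : nat).
Variables (At : 'M[R]_(q, n)) (bt : 'cV[R]_q)
          (D : T -> 'M[R]_(r, n)) (d0 : T -> 'cV[R]_r).
Hypothesis rankAt : \rank At = n.
Variable x : 'cV[R]_n.
Hypothesis Hx : in_regular_closure At bt D d0 x.

Notation V := (cglp_var R T q n r).
Definition CT := ((T * 'I_q) + (T * 'I_r))%type.

Definition comp (w : V) (c : CT) : R :=
  match c with inl (t, j) => uu w t 0 j | inr (t, j) => vv w t 0 j end.

Definition addv (w d : V) (mu : R) : V :=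
  CglpVar (alpha w + mu *: alpha d) (beta w + mu * beta d)
    (fun t => uu w t + mu *: uu d t) (fun t => vv w t + mu *: vv d t).

Definition fx (w : V) := beta w - (alpha w *m x) 0 0.

Definition supp (w : V) := [set c | comp w c != 0].

Lemma sumE (w : V) :
  \sum_(t : T) \sum_(i < q) uu w t 0 i + \sum_(t : T) \sum_(i < r) vv w t 0 i
  = \sum_(c : CT) comp w c.
Proof.
rewrite big_sumType; congr (_ + _); rewrite pair_big /=;
  by apply: eq_bigr => -[t i].
Qed.

Lemma comp_add w d mu c : comp (addv w d mu) c = comp w c + mu * comp d c.
Proof. by case: c => -[t j] /=; rewrite !mxE. Qed.

Lemma fx_add w d mu : fx (addv w d mu) = fx w + mu * fx d.
Proof.
rewrite /fx /= mulmxDl -scalemxAl.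
move: (alpha w *m x) (alpha d *m x) => a b; rewrite !mxE; ring.
Qed.

Lemma eqs_add w d mu : cglp_eqs At bt D d0 1 w -> cglp_eqs At bt D d0 0 d ->
  cglp_eqs At bt D d0 1 (addv w d mu).
Proof.
move=> [E1 [E2 E3]] [F1 [F2 F3]]; split; [|split].
- move=> t; have := E1 t; have := F1 t; rewrite /= !mulmxDl -!scalemxAl.
  move: (uu w t *m At) (uu d t *m At) (vv w t *m D t) (vv d t *m D t) => a b c e.
  move=> hd hw; apply/rowP => k.
  have := congr1 (fun M : 'rV[R]_n => M 0 k) hd.
  have := congr1 (fun M : 'rV[R]_n => M 0 k) hw.
  rewrite !mxE => gw gd.
  have -> : (0 : R) = (alpha w 0 k - a 0 k - c 0 k) + mu * (alpha d 0 k - b 0 k - e 0 k).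
    by rewrite gw gd mulr0 addr0.
  ring.
- move=> t; have := E2 t; have := F2 t; rewrite /= !mulmxDl -!scalemxAl.
  move: (uu w t *m bt) (uu d t *m bt) (vv w t *m d0 t) (vv d t *m d0 t) => a b c e.
  rewrite !mxE => gd gw.
  have -> : (0 : R) = (beta w - a 0 0 - c 0 0) + mu * (beta d - b 0 0 - e 0 0).
    by rewrite gw gd mulr0 addr0.
  ring.
- rewrite sumE; under eq_bigr do rewrite comp_add.
  by rewrite big_split /= -mulr_sumr -(sumE d) F3 -(sumE w) E3 mulr0 addr0.
Qed.

Lemma feasE w : cglp_feasible At bt D d0 w <->
  cglp_eqs At bt D d0 1 w /\ forall c, 0 <= comp w c.
Proof.
split=> [[E [U W]]|[E C]]; split=> //.
  by case=> -[t j] /=.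
by split=> t j; [apply: (C (inl (t, j))) | apply: (C (inr (t, j)))].
Qed.

Lemma basic_cut w : cglp_basic At bt D d0 w -> indep At (Nset w) -> fx w <= 0.
Proof.
move=> B iN; have [f [fi fu fN]] := extend rankAt iN.
have reg : cglp_regular_bfs At bt D d0 w.
  split=> //; exists f; split=> //; split=> // t j nf.
  have [_ [U _]] := B.1.
  apply/eqP; apply: contraT => ne.
  have jN : j \in Nset w.
    rewrite inE; apply/existsP; exists t; by rewrite lt_def ne U.
  by case: (fN j jN) => i fij; have := nf i; rewrite fij eqxx.
have := Hx.2 (alpha w) (beta w).
rewrite /fx subr_le0; apply; exists w; split=> //; exists 1.
by rewrite ltr01 scale1r mul1r.
Qed.

Lemma indep_sub (S S' : {set 'I_q}) : S' \subset S -> indep At S -> indep At S'.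
Proof.
move=> sS iS y yS; apply: iS => j jS; apply: yS; apply: contra jS; exact: (subsetP sS).
Qed.

Lemma step w : cglp_feasible At bt D d0 w -> ~ cglp_basic At bt D d0 w ->
  exists w', [/\ cglp_feasible At bt D d0 w', (#|supp w'| < #|supp w|)%N,
    Nset w' \subset Nset w & fx w <= fx w'].
Proof.
move=> fw nB.
have [fe fc] := (feasE w).1 fw.
have [d [Ed Su Sv nz]] : exists d, [/\ cglp_eqs At bt D d0 0 d,
    (forall t i, uu w t 0 i = 0 -> uu d t 0 i = 0),
    (forall t i, vv w t 0 i = 0 -> vv d t 0 i = 0) & ~ cglp_zero d].
  apply: NNPP => H; apply: nB; split => // d E U W; apply: NNPP => Z; apply: H.
  by exists d.
have Sc : forall c, comp w c = 0 -> comp d c = 0.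
  by case=> -[t j] /=; [apply: Su | apply: Sv].
have [c0 c0nz] : exists c, comp w c != 0.
  apply: NNPP => H.
  have : \sum_c comp w c = 0.
    apply: big1 => c _; apply/eqP; apply: contraT => ne; exfalso; apply: H; by exists c.
  by have [_ [_ E3]] := fe; rewrite -sumE E3; apply/eqP; rewrite oner_eq0.
pose t0 : T := match c0 with inl (t, _) => t | inr (t, _) => t end.
have [c1 c1nz] : exists c, comp d c != 0.
  apply: NNPP => H; apply: nz.
  have Z : forall c, comp d c = 0.
    move=> c; apply/eqP; apply: contraT => ne; exfalso; apply: H; by exists c.
  have U0 : forall t, uu d t = 0.
    by move=> t; apply/rowP => j; rewrite mxE; exact: (Z (inl (t, j))).
  have V0 : forall t, vv d t = 0.
    by move=> t; apply/rowP => j; rewrite mxE; exact: (Z (inr (t, j))).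
  have [F1 [F2 F3]] := Ed.
  split; [| split; [|split]] => //.
  - by have := F1 t0; rewrite U0 V0 !mul0mx !subr0.
  - by have := F2 t0; rewrite U0 V0 !mul0mx !mxE !subr0.
have sd : \sum_c comp d c = 0 by rewrite -sumE; exact: Ed.2.2.
pose s : R := if 0 <= fx d then 1 else -1.
have sfx : 0 <= s * fx d.
  rewrite /s; case: ifP => h; first by rewrite mul1r.
  by rewrite mulN1r oppr_ge0; apply: ltW; rewrite ltNge h.
pose g c := s * comp d c.
have sg : s != 0.
  by rewrite /s; case: ifP => _; [exact: oner_neq0 | rewrite oppr_eq0 oner_neq0].
have [cm gneg] : exists c, g c < 0.
  apply: NNPP => H.
  have gpos : forall c, 0 <= g c.
    move=> c; rewrite leNgt; apply/negP => h; apply: H; by exists c.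
  have : \sum_c g c = 0 by rewrite -mulr_sumr sd mulr0.
  move/(psumr_eq0P (fun c _ => gpos c)) => /(_ c1 isT) /eqP.
  by rewrite mulf_eq0 (negbTE sg) (negbTE c1nz).
pose ratio c := comp w c / - g c.
case: (@arg_minP _ _ _ cm (fun c => g c < 0) ratio gneg) => c' gc' minc.
have wpos : forall c, g c < 0 -> 0 < comp w c.
  move=> c gc; rewrite lt_def fc andbT; apply/eqP => w0.
  by move: gc; rewrite /g (Sc c w0) mulr0 ltxx.
pose lam := ratio c'.
have lam0 : 0 <= lam.
  by rewrite /lam /ratio divr_ge0 // oppr_ge0 ltW.
pose w' := addv w d (s * lam).
have cw' : forall c, comp w' c = comp w c + lam * g c.
  by move=> c; rewrite comp_add /g mulrA (mulrC s).
exists w'; split.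
- apply/feasE; split; first exact: eqs_add.
  move=> c; rewrite cw'; case: (leP 0 (g c)) => h.
    by apply: addr_ge0 => //; apply: mulr_ge0.
  have := minc c h; rewrite -/lam /ratio ler_pdivlMr ?oppr_gt0 // => H.
  by rewrite -[lam * g c]opprK subr_ge0 -mulrN.
- apply: proper_card; apply/properP; split.
    apply/subsetP => c; rewrite !inE; apply: contra => /eqP w0.
    by rewrite cw' /g (Sc c w0) w0 !mulr0 addr0.
  exists c'; first by rewrite inE gt_eqF // wpos.
  rewrite inE cw' /lam /ratio negbK; apply/eqP.
  have : g c' != 0 by rewrite lt_eqF.
  move: (g c') (comp w c') => a b a0; field.
  done.
- apply/subsetP => j; rewrite !inE => /existsP [t ht]; apply/existsP; exists t.
  have := fc (inl (t, j)); rewrite /= le_eqVlt => /orP[/eqP w0|//].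
  have := cw' (inl (t, j)); rewrite /= /g (Sc (inl (t, j)) (esym w0)) -w0 !mulr0 addr0.
  by move=> e; move: ht; rewrite e ltxx.
- rewrite /w' fx_add lerDl (mulrC s) -mulrA; exact: mulr_ge0.
Qed.

Lemma main_ind k w : (#|supp w| <= k)%N -> cglp_feasible At bt D d0 w ->
  indep At (Nset w) -> fx w <= 0.
Proof.
elim: k w => [|k IH] w sw fw iw;
  (case: (classic (cglp_basic At bt D d0 w)) => [B|nB]; first exact: basic_cut);
  have [w' [fw' sw' Nw' le]] := step fw nB.
  by have := leq_trans sw' sw.
apply: le_trans le _; apply: IH => //; last exact: indep_sub iw.
by rewrite -ltnS; apply: leq_trans sw' sw.
Qed.
End Main.

Lemma rank_tildeA (R : realFieldType) (m n p : nat) (A : 'M[rat]_(m, n)) :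
  \rank (map_mx (@ratr R) (tildeA p A)) = n.
Proof.
apply/anti_leq/andP; split; first exact: rank_leq_col.
rewrite -{1}(mxrank1 R n); apply: mxrankS; apply/row_subP => i.
have -> : row i (1%:M : 'M[R]_n) = row (rshift m (lshift p i)) (map_mx (@ratr R) (tildeA p A)).
  apply/rowP => k; rewrite [RHS]mxE [RHS]mxE /tildeA col_mxEd col_mxEu !mxE.
  by rewrite rmorph_nat.
exact: row_sub.
Qed.

Theorem corollary1 (R : realFieldType) (m n p r : nat) (T : finType)
    (A : 'M[rat]_(m, n)) (b : 'cV[rat]_m)
    (D : T -> 'M[rat]_(r, n)) (d0 : T -> 'cV[rat]_r)
    (w : cglp_var R T (m + (n + p)) n r) :
  (p <= n)%N ->
  let At := map_mx (@ratr R) (tildeA p A) in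
  let bt := map_mx (@ratr R) (tildeb n p b) in
  let Dt := fun t => map_mx (@ratr R) (D t) in
  let d0t := fun t => map_mx (@ratr R) (d0 t) in
  cglp_feasible At bt Dt d0t w ->
  ~ cglp_basic At bt Dt d0t w ->
  row_free (subrows (Nset w) At) ->
  forall x : 'cV[R]_n,
    in_regular_closure At bt Dt d0t x -> beta w <= (alpha w *m x) 0 0.
Proof.
move=> _ At bt Dt d0t fw _ rf x Hx.
rewrite -subr_le0.
exact: (main_ind (rank_tildeA R p A) Hx (leqnn _) fw (indep_rowfree rf)).
Qed.
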